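(* Let $\mathbb X$ be the stationary Markov chain on $I\cup\mathcal E$ with transition matrix $P^\pi$ and stationary law $\pi$, let $\mathbb Y^{(\mathcal A)}$ be the stationary Markov chain on $I^2\times\mathcal E^*$ with transition matrix $\mathcal A$ and stationary law $\eta$, and let $\mathbb G$ be an i.i.d. sequence on $\mathcal E$ with law $\pi(\delta\mid\mathcal E)=\pi(\delta)/\pi(\mathcal E)$, so $h(\mathbb G)=-\sum_{\delta\in\mathcal E}\pi(\delta\mid\mathcal E)\log\pi(\delta\mid\mathcal E)$. Then $$h(\mathbb X)=\pi(I)\,h(\mathbb Y^{(\mathcal A)})+\pi(\mathcal E)^2h(\mathbb G)-\pi(I)\pi(\mathcal E)\log\pi(I)-\pi(\mathcal E)^2\log\pi(\mathcal E).$$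
   Context: $I$ and $\mathcal E$ are disjoint countable sets, $\mathcal E\ne\emptyset$; $P$ is a stochastic matrix on $I\cup\mathcal E$ with all $\epsilon\in\mathcal E$ absorbing, irreducible restriction $P_I$ to $I$, $\sum_{i\in I}P(i,\mathcal E)>0$ where $P(i,\mathcal E)=\sum_{\epsilon\in\mathcal E}P(i,\epsilon)$, and $\mathcal E$ reached a.s. from every $i\in I$. $\mu$ is a quasi-stationary distribution of $P_I$: a probability on $I$ with $\mu^tP_I=\gamma\mu^t$, $\gamma=\sum_{i,j\in I}\mu(i)P(i,j)\in(0,1)$. $\pi$ is the probability on $I\cup\mathcal E$ with $\pi(i)=\gamma\mu(i)$ ($i\in I$), $\pi(\epsilon)=\sum_{i\in I}\mu(i)P(i,\epsilon)$ ($\epsilon\in\mathcal E$); $\pi(I)=\gamma$, $\pi(\mathcal E)=1-\gamma$. $P^\pi$ equals $P$ on rows $i\in I$ and has every row $\epsilon\in\mathcal E$ equal to $\pi$; $\pi$ is stationary for $P^\pi$. Let $\mathcal E^*=\mathcal E\cup\{o\}$, $o\notin I\cup\mathcal E$. The matrix $\mathcal A$ on $I^2\times\mathcal E^*$: $\mathcal A((i,j,\delta),(l,k,\epsilon))=0$ if $l\ne j$, $=P(j,k)$ if $l=j,\epsilon=o$, $=P(j,\epsilon)\mu(k)$ if $l=j,\epsilon\in\mathcal E$; its stationary law is $\eta(i,j,\delta)=\mu(i)P(i,j)\mathbf 1(\delta=o)+\mu(i)P(i,\delta)\mu(j)\mathbf 1(\delta\in\mathcal E)$. For a stationary Markov chain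 $\mathbb Z$ with transition matrix $R$ and stationary law $\nu$, $h(\mathbb Z)=-\sum_a\nu(a)\sum_bR(a,b)\log R(a,b)$ (with $0\log0=0$). *)

(* Defs.v *)
From HB Require Import structures.
From mathcomp Require Import all_boot all_order all_algebra.
From mathcomp Require Import all_classical all_reals.
From mathcomp Require Import topology normedtype sequences esum exp ereal.
From Stdlib Require Import Relations.
Set Implicit Arguments. Unset Strict Implicit. Unset Printing Implicit Defensive.
Import Order.TTheory GRing.Theory Num.Theory.
Local Open Scope classical_set_scope.
Local Open Scope ring_scope.

Section Defs.
Variable R : realType.

Definition xlogx (x : R) : R := if x == 0 then 0 else x * ln x.

(* entropy of a stationary Markov chain with stationary law nu and
   transition matrix Q:  - sum_a nu(a) sum_b Q(a,b) log Q(a,b),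
   a sum of nonnegative terms, hence taken in the extended reals *)
Definition mc_entropy (S : choiceType) (nu : S -> R) (Q : S -> S -> R) : \bar R :=
  \esum_(a in [set: S]) \esum_(b in [set: S]) (nu a * - xlogx (Q a b))%:E.

Definition iid_entropy (S : choiceType) (p : S -> R) : \bar R :=
  \esum_(d in [set: S]) (- xlogx (p d))%:E.

Variables (I E : countType).
Notation St := (I + E)%type.

(* probability, starting from i, of not being absorbed in E by time n *)
Fixpoint surv (P : St -> St -> R) (n : nat) (i : I) : \bar R :=
  match n with
  | 0 => 1%E
  | n.+1 => \esum_(j in [set: I]) ((P (inl i) (inl j))%:E * surv P n j)%E
  end.

(* pi(epsilon) = sum_i mu(i) P(i, epsilon) (a finite sum, <= 1) *)
Definition piE (P : St -> St -> R) (mu : I -> R) (e : E) : R :=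
  fine (\esum_(i in [set: I]) (mu i * P (inl i) (inr e))%:E).

Definition pi_law (P : St -> St -> R) (mu : I -> R) (gamma : R) (x : St) : R :=
  match x with
  | inl i => gamma * mu i
  | inr e => piE P mu e
  end.

Definition Ppi (P : St -> St -> R) (mu : I -> R) (gamma : R) (x y : St) : R :=
  match x with
  | inl _ => P x y
  | inr _ => pi_law P mu gamma y
  end.

(* E^* = option E, with None playing the role of o *)
Definition Amat (P : St -> St -> R) (mu : I -> R)
    (u v : (I * I) * option E) : R :=
  let: ((_, j), _) := u in
  let: ((l, k), eps) := v in
  if l != j then 0 else
  match eps with
  | None => P (inl j) (inl k)
  | Some e => P (inl j) (inr e) * mu k
  end.

Definition eta_law (P : St -> St -> R) (mu : I -> R)
    (u : (I * I) * option E) : R :=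
  let: ((i, j), d) := u in
  match d with
  | None => mu i * P (inl i) (inl j)
  | Some e => mu i * P (inl i) (inr e) * mu j
  end.

Definition pi_condE (P : St -> St -> R) (mu : I -> R) (gamma : R) (e : E) : R :=
  piE P mu e / (1 - gamma).

End Defs.

(* Main.v *)
Require Import Defs.
From HB Require Import structures.
From mathcomp Require Import all_boot all_order all_algebra.
From mathcomp Require Import all_classical all_reals.
From mathcomp Require Import topology normedtype sequences esum exp ereal.
From Stdlib Require Import Relations.
From Stdlib Require Import Relations.
From mathcomp Require Import ring lra.
Set Implicit Arguments. Unset Strict Implicit. Unset Printing Implicit Defensive.
Import Order.TTheory GRing.Theory Num.Theory.
Local Open Scope classical_set_scope.
Local Open Scope ring_scope.

Section Helpers.
Variable R : realType.
Local Open Scope ereal_scope.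

Lemma esumZl_real (T : choiceType) (S : set T) (r : R) (a : T -> \bar R) :
  (0 <= r)%R -> (forall i, 0 <= a i) ->
  \esum_(i in S) (r%:E * a i) = r%:E * \esum_(i in S) a i.
Proof.
move=> r0 a0; rewrite /esum -ereal_supZl //; last first.
  by apply/set0P; exists 0; exists set0; [exact: fsets_set0|rewrite fsbig_set0].
congr ereal_sup; apply/seteqP; split => x /=.
- move=> [A HA <-]; exists (\sum_(i \in A) a i); first by exists A.
  by rewrite ge0_mule_fsumr.
- by move=> [y [A HA <-] <-]; exists A => //; rewrite ge0_mule_fsumr.
Qed.

Lemma esumMr (T : choiceType) (S : set T) (a : T -> \bar R) (K : \bar R) :
  (forall i, 0 <= a i) -> 0 <= K ->
  \esum_(i in S) (a i * K) = (\esum_(i in S) a i) * K.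
Proof.
move=> a0; case: K => [k| |] //= k0.
- rewrite muleC -esumZl_real //; apply: eq_esum => i _; by rewrite muleC.
- have [allz|] := pselect (forall i, S i -> a i = 0).
    rewrite (@esum1 _ _ S a) // mul0e esum1 // => i /allz ->; by rewrite mul0e.
  move/existsNP => [i /not_implyP [Si ai]].
  have ai0 : 0 < a i by rewrite lt_neqAle eq_sym; apply/andP; split => //; apply/eqP.
  have le1 : forall b : T -> \bar R, (forall j, 0 <= b j) -> b i <= \esum_(j in S) b j.
    move=> b b0; apply: esum_ge; exists [set i].
      by split; [exact: finite_set1| move=> j ->].
    by rewrite fsbig_set1.
  have -> : (\esum_(i0 in S) a i0) * +oo = +oo.
    by rewrite muleC gt0_mulye // (lt_le_trans ai0) // le1.
  apply/eqP; rewrite eq_le leey /=.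
  have := le1 (fun j => a j * +oo) => /=; rewrite muleC gt0_mulye //; apply.
  move=> j; exact: mule_ge0.
Qed.


Lemma esum_ge1 (T : choiceType) (f : T -> \bar R) (x : T) :
  (forall y, 0 <= f y) -> f x <= \esum_(y in [set: T]) f y.
Proof.
move=> f0; apply: esum_ge; exists [set x].
  by split; [exact: finite_set1| move=> j ->].
by rewrite fsbig_set1.
Qed.

Lemma esum_sumT (A B : choiceType) (f : (A + B)%type -> \bar R) :
  (forall x, 0 <= f x) ->
  \esum_(x in [set: (A + B)%type]) f x =
  \esum_(a in [set: A]) f (inl a) + \esum_(b in [set: B]) f (inr b).
Proof.
move=> f0; rewrite (esumID (range inl)) //.
have -> : [set: (A + B)%type] `&` range inl = inl @` [set: A].
  by rewrite setTI.
have -> : [set: (A + B)%type] `&` ~` range inl = inr @` [set: B].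
  apply/seteqP; split => [[a|b]|] /=.
  - by move=> [_ H]; exfalso; apply: H; exists a.
  - by move=> _; exists b.
  - by move=> x [b _ <-]; split => // -[a _].
rewrite (esum_image _ inl) ?(esum_image _ inr) //.
- by move=> ? ? _ _ [].
- by move=> ? ? _ _ [].
Qed.

Lemma esum_pairT (A B : choiceType) (f : (A * B)%type -> \bar R) :
  (forall x, 0 <= f x) ->
  \esum_(x in [set: (A * B)%type]) f x =
  \esum_(a in [set: A]) \esum_(b in [set: B]) f (a, b).
Proof.
move=> f0; rewrite esum_esum //.
have -> : [set: A] `*`` (fun=> [set: B]) = [set: (A * B)%type].
  by apply/seteqP; split => [[a b]|[a b]].
by apply: eq_esum => -[a b].
Qed.

Lemma esum_optionT (B : choiceType) (f : option B -> \bar R) :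
  (forall x, 0 <= f x) ->
  \esum_(x in [set: option B]) f x = f None + \esum_(b in [set: B]) f (Some b).
Proof.
move=> f0; rewrite (esumID [set None]) //.
have -> : [set: option B] `&` [set None] = [set None] by rewrite setTI.
have -> : [set: option B] `&` ~` [set None] = Some @` [set: B].
  apply/seteqP; split => [[b|]|] /=.
  - by move=> _; exists b.
  - by move=> [_ H]; exfalso; apply: H.
  - by move=> x [b _ <-].
rewrite esum_set1 // (esum_image _ Some) //; try by move=> ? ? _ _ [].
Qed.

Lemma esum_swap (A B : choiceType) (f : A -> B -> \bar R) :
  (forall a b, 0 <= f a b) ->
  \esum_(a in [set: A]) \esum_(b in [set: B]) f a b =
  \esum_(b in [set: B]) \esum_(a in [set: A]) f a b.
Proof.
move=> f0.
rewrite -(@esum_pairT _ _ (fun x : A * B => f x.1 x.2)); last by move=> [].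
rewrite -(@esum_pairT _ _ (fun x : B * A => f x.2 x.1)); last by move=> [].
rewrite (reindex_esum [set: (B * A)%type] [set: (A * B)%type] (fun x => (x.2, x.1))) //.
split.
- by move=> [].
- by move=> [? ?] [? ?] _ _ [-> ->].
- by move=> [a b] _; exists (b, a).
Qed.

Lemma esum_delta (A : choiceType) (a0 : A) (f : A -> \bar R) :
  (forall x, x != a0 -> f x = 0) -> 0 <= f a0 ->
  \esum_(x in [set: A]) f x = f a0.
Proof.
move=> fz f0; rewrite (esumID [set a0]).
  rewrite setTI esum_set1 // esum1 ?adde0 // => x [_ /eqP xa].
  by apply: fz.
move=> x _; have [->|/fz ->] := eqVneq x a0 => //.
Qed.

End Helpers.

Section XL.
Variable R : realType.

Lemma xlogx_le0 (x : R) : 0 <= x <= 1 -> xlogx x <= 0.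
Proof.
move=> /andP[x0 x1]; rewrite /xlogx; case: eqP => // _.
by rewrite mulr_ge0_le0 // ln_le0.
Qed.

Lemma L_ge0 (x : R) : 0 <= x <= 1 -> 0 <= - xlogx x.
Proof. by move=> h; rewrite oppr_ge0 xlogx_le0. Qed.

Lemma xlogxM (a b : R) : 0 <= a -> 0 <= b ->
  xlogx (a * b) = a * xlogx b + b * xlogx a.
Proof.
rewrite /xlogx => a0 b0.
have [->|an] := eqVneq a 0; first by rewrite !(mul0r, mulr0, eqxx, addr0).
have [->|bn] := eqVneq b 0; first by rewrite !(mul0r, mulr0, eqxx, addr0, add0r).
rewrite mulf_eq0 (negPf an) (negPf bn) /= lnM ?posrE ?lt0r ?an ?bn //.
by rewrite mulrDr; ring.
Qed.

Lemma xlogx_pos (x : R) : 0 < x -> xlogx x = x * ln x.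
Proof. by rewrite /xlogx => /gt_eqF ->. Qed.

Lemma xlogx0 : xlogx (0 : R) = 0.
Proof. by rewrite /xlogx eqxx. Qed.

End XL.

Unset Implicit Arguments.

Theorem proposition5 (R : realType) (I E : countType)
  (P : (I + E)%type -> (I + E)%type -> R) (mu : I -> R) (gamma : R) :
  (* P is a stochastic matrix *)
  (forall x y, 0 <= P x y) ->
  (forall x, (\esum_(y in [set: (I + E)%type]) (P x y)%:E)%E = 1%E) ->
  (* every epsilon in E is absorbing *)
  (forall e : E, P (inr e) (inr e) = 1) ->
  (* E nonempty *)
  (exists e : E, True) ->
  (* P_I irreducible *)
  (forall i j : I, clos_refl_trans I (fun a b => 0 < P (inl a) (inl b)) i j) ->
  (* sum_i P(i, E) > 0 *)
  (exists (i : I) (e : E), 0 < P (inl i) (inr e)) ->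
  (* E is reached a.s. from every i in I *)
  (forall i : I, (fun n => surv P n i) @ \oo --> (0%:E : \bar R)) ->
  (* mu is a probability on I *)
  (forall i, 0 <= mu i) ->
  (\esum_(i in [set: I]) (mu i)%:E)%E = 1%E ->
  (* gamma = sum_{i,j in I} mu(i) P(i,j), in (0,1) *)
  gamma%:E = (\esum_(i in [set: I]) \esum_(j in [set: I])
                 (mu i * P (inl i) (inl j))%:E)%E ->
  0 < gamma < 1 ->
  (* mu is quasi-stationary: mu^t P_I = gamma mu^t *)
  (forall j : I,
     (\esum_(i in [set: I]) (mu i * P (inl i) (inl j))%:E)%E = (gamma * mu j)%:E) ->
  mc_entropy (pi_law P mu gamma) (Ppi P mu gamma) =
    (gamma%:E * mc_entropy (eta_law P mu) (Amat P mu)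
     + ((1 - gamma) ^+ 2)%:E * iid_entropy (pi_condE P mu gamma)
     - (gamma * (1 - gamma) * ln gamma)%:E
     - ((1 - gamma) ^+ 2 * ln (1 - gamma))%:E)%E.
Proof.
move=> P0 Prow _ _ _ _ _ mu0 mu1 gdef /andP[g0 g1] qsd.
set L := fun x : R => (- xlogx x)%R.
have P1 : forall x y, P x y <= 1.
  move=> x y; rewrite -lee_fin -(Prow x).
  by apply: (esum_ge1 (f := fun y => (P x y)%:E) y) => z; rewrite lee_fin.
have mu_1 : forall i, mu i <= 1.
  move=> i; rewrite -lee_fin -mu1.
  by apply: (esum_ge1 (f := fun y => (mu y)%:E) i) => z; rewrite lee_fin.
set rowI := fun i => (\esum_(k in [set: I]) (P (inl i) (inl k))%:E)%E.
set rowE := fun i => (\esum_(e in [set: E]) (P (inl i) (inr e))%:E)%E.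
have rowIE : forall i, (rowI i + rowE i = 1)%E.
  by move=> i; rewrite -(Prow (inl i)) esum_sumT // => y; rewrite lee_fin.
have rowI0 : forall i, (0 <= rowI i)%E by move=> i; apply: esum_ge0 => y _; rewrite lee_fin.
have rowE0 : forall i, (0 <= rowE i)%E by move=> i; apply: esum_ge0 => y _; rewrite lee_fin.
have fin2 : forall a b : \bar R, (0 <= a)%E -> (0 <= b)%E -> (a + b = 1)%E ->
    a = (fine a)%:E /\ b = (fine b)%:E.
  by move=> [a| |] [b| |].
set pjE := fun i => fine (rowE i).
have pjEE : forall i, (pjE i)%:E = rowE i.
  by move=> i; have [_ ->] := fin2 _ _ (rowI0 i) (rowE0 i) (rowIE i).
have piEE : forall e, (Defs.piE P mu e)%:E =
    (\esum_(i in [set: I]) (mu i * P (inl i) (inr e))%:E)%E.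
  move=> e; rewrite /Defs.piE.
  have h0 : (0 <= \esum_(i in [set: I]) (mu i * P (inl i) (inr e))%:E)%E.
    by apply: esum_ge0 => i _; rewrite lee_fin mulr_ge0.
  have h1 : (\esum_(i in [set: I]) (mu i * P (inl i) (inr e))%:E <= 1)%E.
    rewrite -mu1; apply: le_esum => i _; rewrite lee_fin.
    by rewrite ler_piMr.
  by move: h0 h1; case: (\esum_(i in _) _).
have piE0 : forall e, 0 <= Defs.piE P mu e.
  by move=> e; rewrite -lee_fin piEE; apply: esum_ge0 => i _; rewrite lee_fin mulr_ge0.
have muRE : (\esum_(i in [set: I]) (mu i)%:E * rowE i = 
             \esum_(e in [set: E]) (Defs.piE P mu e)%:E)%E.
  rewrite (eq_esum (b := fun e => \esum_(i in [set: I]) (mu i * P (inl i) (inr e))%:E)%E); last by move=> e _; rewrite piEE.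
  rewrite -esum_swap; last by move=> i e; rewrite lee_fin mulr_ge0.
  apply: eq_esum => i _; rewrite /rowE -esumZl_real //.
  by move=> e; rewrite lee_fin.
have muRI : (\esum_(i in [set: I]) (mu i)%:E * rowI i = gamma%:E)%E.
  rewrite gdef; apply: eq_esum => i _; rewrite /rowI -esumZl_real //.
  by move=> e; rewrite lee_fin.
have SE : (\esum_(e in [set: E]) (Defs.piE P mu e)%:E = (1 - gamma)%:E)%E.
  have : (gamma%:E + \esum_(e in [set: E]) (Defs.piE P mu e)%:E = 1)%E.
    rewrite -muRI -muRE -esumD; last 2 first.
    - by move=> i _; rewrite mule_ge0 ?lee_fin.
    - by move=> i _; rewrite mule_ge0 ?lee_fin.
    rewrite -mu1; apply: eq_esum => i _.
    by rewrite -ge0_muleDr // rowIE mule1.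
  have : (0 <= \esum_(e in [set: E]) (Defs.piE P mu e)%:E)%E.
    by apply: esum_ge0 => e _; rewrite lee_fin.
  case: (\esum_(e in _) _) => [s| |] //= _ [] <-.
  by congr (_%:E); ring.
set piE := Defs.piE P mu.
have g1' : 0 < 1 - gamma by rewrite subr_gt0.
have muPE : (\esum_(j in [set: I]) (mu j * pjE j)%:E = (1 - gamma)%:E)%E.
  by rewrite -SE -muRE; apply: eq_esum => j _; rewrite EFinM pjEE.
set c := pi_condE P mu gamma.
have piEc : forall e, piE e = (1 - gamma) * c e.
  by move=> e; rewrite /c /pi_condE mulrC divfK // gt_eqF.
have c0 : forall e, 0 <= c e.
  by move=> e; rewrite /c /pi_condE divr_ge0 // ltW.
have csum : (\esum_(e in [set: E]) (c e)%:E = 1)%E.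
  have -> : (\esum_(e in [set: E]) (c e)%:E = (1 - gamma)^-1%:E * \esum_(e in [set: E]) (piE e)%:E)%E.
    rewrite -esumZl_real; first by apply: eq_esum => e _; rewrite /c /pi_condE mulrC.
      by rewrite invr_ge0 ltW.
    by move=> e; rewrite lee_fin.
  by rewrite SE -EFinM mulVf // gt_eqF.
have c1 : forall e, c e <= 1.
  move=> e; rewrite -lee_fin -csum.
  by apply: (esum_ge1 (f := fun y => (c y)%:E) e) => z; rewrite lee_fin.
have piE1 : forall e, piE e <= 1.
  move=> e; rewrite piEc; apply: mulr_ile1 => //; first exact: ltW.
  by rewrite lerBlDr lerDl ltW.
have piL01 : forall y, 0 <= pi_law P mu gamma y <= 1.
  move=> [i|e] /=; last by rewrite piE0 piE1.
  apply/andP; split; first by rewrite mulr_ge0 // ltW.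
  by apply: mulr_ile1 => //; exact: ltW.
have Ppi01 : forall x y, 0 <= Ppi P mu gamma x y <= 1.
  by move=> [i|e] y /=; rewrite ?P0 ?P1 ?piL01.
have L0 : forall x, 0 <= x <= 1 -> 0 <= L x by move=> x; exact: L_ge0.
have mu01 : forall i, 0 <= mu i <= 1 by move=> i; rewrite mu0 mu_1.
have P01 : forall x y, 0 <= P x y <= 1 by move=> x y; rewrite P0 P1.
have c01 : forall e, 0 <= c e <= 1 by move=> e; rewrite c0 c1.
set A := (\esum_(i in [set: I]) \esum_(y in [set: (I + E)%type])
           (mu i * L (P (inl i) y))%:E)%E.
set Hpi := (\esum_(y in [set: (I + E)%type]) (L (pi_law P mu gamma y))%:E)%E.
set Hmu := (\esum_(i in [set: I]) (L (mu i))%:E)%E.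
set Hc := (\esum_(e in [set: E]) (L (c e))%:E)%E.
have LHS1 : mc_entropy (pi_law P mu gamma) (Ppi P mu gamma) =
    (gamma%:E * A + (1 - gamma)%:E * Hpi)%E.
  rewrite /mc_entropy esum_sumT; last first.
    move=> x; apply: esum_ge0 => y _; rewrite lee_fin mulr_ge0 //.
      by case/andP: (piL01 x).
    exact: L0.
  congr (_ + _)%E.
    rewrite /A -esumZl_real; last first.
    - move=> i; apply: esum_ge0 => y _; rewrite lee_fin mulr_ge0 //.
      exact: L0.
    - exact: ltW.
    apply: eq_esum => i _; rewrite -esumZl_real.
    - by apply: eq_esum => y _ /=; rewrite -EFinM mulrA.
    - exact: ltW.
    - by move=> y; rewrite lee_fin mulr_ge0 // L0.
  rewrite (eq_esum (b := fun e => \esum_(y in [set: (I + E)%type])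
       ((piE e)%:E * (L (pi_law P mu gamma y))%:E))%E) //.
  rewrite esum_swap; last by move=> e y; rewrite lee_fin mulr_ge0 // L0.
  rewrite /Hpi muleC -esumMr; last 2 first.
  - by move=> y; rewrite lee_fin L0.
  - by rewrite lee_fin ltW.
  apply: eq_esum => y _; rewrite esumMr.
  - by rewrite SE muleC.
  - by move=> e; rewrite lee_fin.
  - by rewrite lee_fin L0.
have g01 : 0 <= gamma <= 1 by rewrite !ltW.
have g01' : 0 <= 1 - gamma <= 1.
  by rewrite ltW //= lerBlDr lerDl ltW.
have HpiE : Hpi = (gamma%:E * Hmu + (L gamma)%:E +
                   ((1 - gamma)%:E * Hc + (L (1 - gamma))%:E))%E.
  rewrite /Hpi esum_sumT; last by move=> y; rewrite lee_fin L0.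
  congr (_ + _)%E.
    transitivity (\esum_(i in [set: I]) (gamma%:E * (L (mu i))%:E +
                                         (mu i)%:E * (L gamma)%:E))%E.
      apply: eq_esum => i _ /=; rewrite /L (xlogxM (ltW g0) (mu0 i)).
      by rewrite -!EFinM -EFinD; congr (_%:E); ring.
    rewrite (esumD (a := fun i => gamma%:E * (L (mu i))%:E) (b := fun i => (mu i)%:E * (L gamma)%:E))%E; last 2 first.
    - by move=> i _; apply: mule_ge0; rewrite lee_fin ?L0 // ltW.
    - by move=> i _; apply: mule_ge0; rewrite lee_fin ?L0.
    rewrite esumZl_real; last 2 first.
    - exact: ltW.
    - by move=> i; rewrite lee_fin L0.
    rewrite esumMr; last 2 first.
    - by move=> i; rewrite lee_fin.
    - by rewrite lee_fin L0.
    by rewrite mu1 mul1e.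
  transitivity (\esum_(e in [set: E]) ((1 - gamma)%:E * (L (c e))%:E +
                                       (c e)%:E * (L (1 - gamma))%:E))%E.
    apply: eq_esum => e _ /=; rewrite -/piE piEc /L (xlogxM (ltW g1') (c0 e)).
    by rewrite -!EFinM -EFinD; congr (_%:E); ring.
  rewrite (esumD (a := fun e => (1 - gamma)%:E * (L (c e))%:E) (b := fun e => (c e)%:E * (L (1 - gamma))%:E))%E; last 2 first.
  - by move=> e _; apply: mule_ge0; rewrite lee_fin ?L0 // ltW.
  - by move=> e _; apply: mule_ge0; rewrite lee_fin ?L0.
  rewrite esumZl_real; last 2 first.
  - exact: ltW.
  - by move=> e; rewrite lee_fin L0.
  rewrite esumMr; last 2 first.
  - by move=> e; rewrite lee_fin.
  - by rewrite lee_fin L0.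
  by rewrite csum mul1e.
have Amat01 : forall u v, 0 <= Amat P mu u v <= 1.
  move=> [[i j] d] [[l k] [e|]] /=; case: (l != j); rewrite ?lexx ?ler01 ?P01 //.
  apply/andP; split; first by rewrite mulr_ge0.
  by apply: mulr_ile1.
have eta0 : forall u, 0 <= eta_law P mu u.
  by move=> [[i j] [e|]] /=; rewrite ?mulr_ge0.
have PM01 : forall x y k, 0 <= P x y * mu k <= 1.
  move=> x y k; apply/andP; split; first by rewrite mulr_ge0.
  by apply: mulr_ile1.
have Hmu0 : (0 <= Hmu)%E by apply: esum_ge0 => i _; rewrite lee_fin L0.
have Hc0 : (0 <= Hc)%E by apply: esum_ge0 => e _; rewrite lee_fin L0.
set r := fun j => (\esum_(y in [set: (I + E)%type]) (L (P (inl j) y))%:E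
                   + (pjE j)%:E * Hmu)%E.
have r0 : forall j, (0 <= r j)%E.
  move=> j; apply: adde_ge0; first by apply: esum_ge0 => y _; rewrite lee_fin L0.
  by apply: mule_ge0 => //; rewrite pjEE.
have R1 : forall u, (\esum_(v in [set: ((I * I) * option E)%type])
                      (L (Amat P mu u v))%:E = r u.1.2)%E.
  move=> [[i j] d].
  rewrite esum_pairT; last by move=> v; rewrite lee_fin L0 ?Amat01.
  rewrite esum_pairT; last by move=> v; apply: esum_ge0 => b _; rewrite lee_fin L0 ?Amat01.
  rewrite (esum_delta (a0 := j)); first last.
  - by apply: esum_ge0 => k _; apply: esum_ge0 => b _; rewrite lee_fin L0 ?Amat01.
  - move=> l hl; apply: esum1 => k _; apply: esum1 => b _.
    by rewrite /Amat hl /L xlogx0 oppr0.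
  rewrite /Amat eqxx /=.
  transitivity (\esum_(k in [set: I]) ((L (P (inl j) (inl k)))%:E +
      \esum_(e in [set: E]) (L (P (inl j) (inr e) * mu k))%:E))%E.
    apply: eq_esum => k _; rewrite esum_optionT //.
    by move=> [e|]; rewrite lee_fin L0 ?PM01 ?P01.
  rewrite (esumD (a := fun k => (L (P (inl j) (inl k)))%:E)
     (b := fun k => \esum_(e in [set: E]) (L (P (inl j) (inr e) * mu k))%:E))%E;
     last 2 first.
  - by move=> k _; rewrite lee_fin L0 ?P01.
  - by move=> k _; apply: esum_ge0 => e _; rewrite lee_fin L0 ?PM01.
  transitivity (\esum_(k in [set: I]) (L (P (inl j) (inl k)))%:E +
      ((pjE j)%:E * Hmu + \esum_(e in [set: E]) (L (P (inl j) (inr e)))%:E))%E.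
    congr (_ + _)%E.
    transitivity (\esum_(k in [set: I])
       (\esum_(e in [set: E]) ((P (inl j) (inr e))%:E * (L (mu k))%:E) +
        \esum_(e in [set: E]) ((mu k)%:E * (L (P (inl j) (inr e)))%:E)))%E.
      apply: eq_esum => k _; rewrite -esumD.
      - apply: eq_esum => e _.
        rewrite /L (xlogxM (P0 _ _) (mu0 k)) -!EFinM -EFinD.
        by congr (_%:E); ring.
      - by move=> e _; apply: mule_ge0; rewrite lee_fin ?L0 ?P0 ?mu01.
      - by move=> e _; apply: mule_ge0; rewrite lee_fin ?L0 ?P01 ?mu0.
    rewrite (esumD (a := fun k => \esum_(e in [set: E]) ((P (inl j) (inr e))%:E * (L (mu k))%:E))
       (b := fun k => \esum_(e in [set: E]) ((mu k)%:E * (L (P (inl j) (inr e)))%:E)))%E;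
       last 2 first.
    - by move=> k _; apply: esum_ge0 => e _; apply: mule_ge0; rewrite lee_fin ?L0 ?P0 ?mu01.
    - by move=> k _; apply: esum_ge0 => e _; apply: mule_ge0; rewrite lee_fin ?L0 ?P01 ?mu0.
    congr (_ + _)%E.
      transitivity (\esum_(k in [set: I]) ((pjE j)%:E * (L (mu k))%:E))%E.
        apply: eq_esum => k _; rewrite esumMr.
        - by rewrite pjEE.
        - by move=> e; rewrite lee_fin.
        - by rewrite lee_fin L0.
      rewrite esumZl_real //.
      - by rewrite -lee_fin pjEE.
      - by move=> k; rewrite lee_fin L0.
    rewrite esum_swap; last by move=> k e; apply: mule_ge0; rewrite lee_fin ?L0 ?P01 ?mu0.
    apply: eq_esum => e _; rewrite esumMr.
    - by rewrite mu1 mul1e.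
    - by move=> k; rewrite lee_fin.
    - by rewrite lee_fin L0.
  rewrite /r (addeC ((pjE j)%:E * Hmu)%E) addeA; congr (_ + _)%E.
  by rewrite [in RHS]esum_sumT // => y; rewrite lee_fin L0.
have Mar : forall j, (\esum_(i in [set: I]) \esum_(d in [set: option E])
                     (eta_law P mu ((i, j), d))%:E = (mu j)%:E)%E.
  move=> j.
  transitivity (\esum_(i in [set: I]) ((mu i * P (inl i) (inl j))%:E +
     \esum_(e in [set: E]) ((mu i * P (inl i) (inr e))%:E * (mu j)%:E)))%E.
    apply: eq_esum => i _; rewrite esum_optionT; last by move=> d; rewrite lee_fin eta0.
    by congr (_ + _)%E; apply: eq_esum => e _; rewrite -EFinM.
  rewrite (esumD (a := fun i => (mu i * P (inl i) (inl j))%:E)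
    (b := fun i => \esum_(e in [set: E]) ((mu i * P (inl i) (inr e))%:E * (mu j)%:E)))%E;
    last 2 first.
  - by move=> i _; rewrite lee_fin mulr_ge0.
  - by move=> i _; apply: esum_ge0 => e _; apply: mule_ge0; rewrite lee_fin ?mulr_ge0.
  rewrite qsd.
  transitivity ((gamma * mu j)%:E + (1 - gamma)%:E * (mu j)%:E)%E.
    congr (_ + _)%E.
    transitivity (\esum_(i in [set: I])
       ((\esum_(e in [set: E]) (mu i * P (inl i) (inr e))%:E) * (mu j)%:E))%E.
      apply: eq_esum => i _; rewrite esumMr //.
      - by move=> e; rewrite lee_fin mulr_ge0.
      - by rewrite lee_fin.
    rewrite esumMr; last 2 first.
    - by move=> i; apply: esum_ge0 => e _; rewrite lee_fin mulr_ge0.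
    - by rewrite lee_fin.
    rewrite esum_swap; last by move=> i e; rewrite lee_fin mulr_ge0.
    rewrite -SE; congr (_ * _)%E; apply: eq_esum => e _.
    by rewrite piEE.
  by rewrite -EFinM -EFinD; congr (_%:E); ring.
have A0 : (0 <= A)%E.
  by apply: esum_ge0 => i _; apply: esum_ge0 => y _; rewrite lee_fin mulr_ge0 ?L0.
have RHS1 : mc_entropy (eta_law P mu) (Amat P mu) = (A + (1 - gamma)%:E * Hmu)%E.
  transitivity (\esum_(u in [set: ((I * I) * option E)%type])
                 ((eta_law P mu u)%:E * r u.1.2))%E.
    rewrite /mc_entropy; apply: eq_esum => u _.
    rewrite -R1 -esumZl_real.
    - by apply: eq_esum => v _; rewrite EFinM.
    - exact: eta0.
    - by move=> v; rewrite lee_fin L0.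
  rewrite esum_pairT; last by move=> u; apply: mule_ge0; rewrite ?lee_fin ?eta0.
  rewrite esum_pairT; last first.
    by move=> u; apply: esum_ge0 => d _; apply: mule_ge0; rewrite ?lee_fin ?eta0.
  rewrite esum_swap; last first.
    by move=> i j; apply: esum_ge0 => d _; apply: mule_ge0; rewrite ?lee_fin ?eta0.
  transitivity (\esum_(j in [set: I]) ((mu j)%:E * r j))%E.
    apply: eq_esum => j _; rewrite -Mar -esumMr; last 2 first.
    - by move=> i; apply: esum_ge0 => d _; rewrite lee_fin.
    - exact: r0.
    apply: eq_esum => i _; rewrite -esumMr //.
    by move=> d; rewrite lee_fin.
  transitivity (\esum_(j in [set: I]) ((mu j)%:E *
      (\esum_(y in [set: (I + E)%type]) (L (P (inl j) y))%:E) +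
      (mu j * pjE j)%:E * Hmu))%E.
    apply: eq_esum => j _; rewrite /r ge0_muleDr.
    - by rewrite EFinM muleA.
    - by apply: esum_ge0 => y _; rewrite lee_fin L0.
    - by apply: mule_ge0 => //; rewrite pjEE.
  rewrite (esumD (a := fun j => (mu j)%:E *
      \esum_(y in [set: (I + E)%type]) (L (P (inl j) y))%:E)
      (b := fun j => (mu j * pjE j)%:E * Hmu))%E; last 2 first.
  - by move=> j _; apply: mule_ge0; rewrite ?lee_fin //; apply: esum_ge0 => y _; rewrite lee_fin L0.
  - move=> j _; apply: mule_ge0 => //; rewrite lee_fin mulr_ge0 //.
    by rewrite -lee_fin pjEE.
  congr (_ + _)%E.
    rewrite /A; apply: eq_esum => j _; rewrite -esumZl_real //.
    by move=> y; rewrite lee_fin L0.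
  rewrite esumMr //; first by rewrite muPE.
  move=> j; rewrite lee_fin mulr_ge0 //.
  by rewrite -lee_fin pjEE.
rewrite LHS1 RHS1 HpiE.
change (iid_entropy c) with Hc.
have gE : (0 <= gamma%:E)%E by rewrite lee_fin ltW.
have gE' : (0 <= (1 - gamma)%:E)%E by rewrite lee_fin ltW.
have LgE : (0 <= (L gamma)%:E)%E by rewrite lee_fin L0.
have LgE' : (0 <= (L (1 - gamma))%:E)%E by rewrite lee_fin L0.
rewrite (ge0_muleDr _ (adde_ge0 (mule_ge0 gE Hmu0) LgE) (adde_ge0 (mule_ge0 gE' Hc0) LgE')).
rewrite (ge0_muleDr _ (mule_ge0 gE Hmu0) LgE) (ge0_muleDr _ (mule_ge0 gE' Hc0) LgE').
rewrite (ge0_muleDr _ A0 (mule_ge0 gE' Hmu0)).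
rewrite !muleA -!EFinM /L (xlogx_pos g0) (xlogx_pos g1').
have e1 : (1 - gamma) * - (gamma * ln gamma) = - (gamma * (1 - gamma) * ln gamma) by ring.
have e2 : (1 - gamma) * - ((1 - gamma) * ln (1 - gamma)) =
          - ((1 - gamma) ^+ 2 * ln (1 - gamma)) by ring.
rewrite e1 e2 (mulrC (1 - gamma) gamma) -expr2.
rewrite !EFinN !addeA; congr (_ + _)%E.
by rewrite addeAC.
Qed.
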